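(* For a single-cell region ($n_x=n_y=n_z=1$) formed by the primary cell with corners $(i,j,k)$ and $(i+1,j+1,k+1)$, carrying potential values $U_{i+a,j+b,k+c}$, $a,b,c\in\{0,1\}$, at its eight nodes, let $$\Delta t^{(i,j,k)}_{\mathrm{CFL}}=\frac{2}{\frac{2\hbar}{m}\left(\frac{1}{(\Delta x)^2}+\frac{1}{(\Delta y)^2}+\frac{1}{(\Delta z)^2}\right)+\frac{1}{\hbar}\max_{a,b,c\in\{0,1\}}|U_{i+a,j+b,k+c}|}$$ and let $\Delta t^{(i,j,k)}_{\mathrm{CFL,gen}}$ be the generalized CFL limit of this single-cell region. Then $\Delta t^{(i,j,k)}_{\mathrm{CFL}}\le\Delta t^{(i,j,k)}_{\mathrm{CFL,gen}}$.
   Context: Fix constants $\hbar>0$, $m>0$, cell sizes $\Delta x,\Delta y,\Delta z>0$. For a single-cell region (one primary cell of size $\Delta x\times\Delta y\times\Delta z$, local nodes $(a+1,b+1,c+1)$, $a,b,c\in\{0,1\}$, ordered by $(a+1)+2b+4c$), let $D_U$ be the $8\times8$ diagonal matrix of the node potentials. Let $I_p$ be the $p\times p$ identity, $W_1=[-1\ \ 1]$, $\otimes$ the Kronecker product. Define $D_V''=\frac{\Delta x\Delta y\Delta z}{8}I_8$; $D=-[I_2\otimes I_2\otimes W_1^T\ \ I_2\otimes W_1^T\otimes I_2\ \ W_1^T\otimes I_2\otimes I_2]$; $D_S''=\mathrm{diag}(\frac{\Delta y\Delta z}{4}I_4,\frac{\Delta x\Delta z}{4}I_4,\frac{\Delta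 x\Delta y}{4}I_4)$; $D_l'=\mathrm{diag}(\Delta x I_4,\Delta y I_4,\Delta z I_4)$; $H=\frac{\hbar^2}{2m}D D_S''(D_l')^{-1}D^T+D_V''D_U$. The generalized CFL limit is $\Delta t_{\mathrm{CFL,gen}}=2/\rho\!\left(\frac{1}{\hbar}(D_V'')^{-1/2}H(D_V'')^{-1/2}\right)$, with $\rho$ the spectral radius. *)

(* Defs.v *)
From HB Require Import structures.
From mathcomp Require Import all_boot all_order all_algebra.
From mathcomp Require Import classical_sets boolp reals.
From mathcomp Require Import complex mxtens.
Set Implicit Arguments. Unset Strict Implicit. Unset Printing Implicit Defensive.
Import Order.TTheory GRing.Theory Num.Theory.
Local Open Scope ring_scope.

Definition spectral_radius (R : realType) (n : nat) (A : 'M[R]_n) : R :=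
  sup [set r : R | exists z : R[i],
         eigenvalue (map_mx (fun x : R => (x%:C)%C) A) z /\ ComplexField.Normc.normc z = r].

Section SingleCell.
Variable R : realType.

Definition W1 : 'M[R]_(1, 2) := \row_(j < 2) (if j == 0 then -1 else 1).

Definition Dmat : 'M[R]_(8, 4 + 4 + 4) :=
  - row_mx (row_mx
      ((1%:M : 'M[R]_2) *t (1%:M : 'M[R]_2) *t W1^T : 'M[R]_(8, 4))
      ((1%:M : 'M[R]_2) *t W1^T *t (1%:M : 'M[R]_2) : 'M[R]_(8, 4)))
      (W1^T *t (1%:M : 'M[R]_2) *t (1%:M : 'M[R]_2) : 'M[R]_(8, 4)).

Definition diag3 (a b c : R) : 'M[R]_(4 + 4 + 4) :=
  block_mx (block_mx (a%:M) 0 0 (b%:M)) 0 0 (c%:M).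

Definition DS2 (dx dy dz : R) := diag3 (dy * dz / 4) (dx * dz / 4) (dx * dy / 4).
Definition Dl1 (dx dy dz : R) := diag3 dx dy dz.
Definition DV2 (dx dy dz : R) : 'M[R]_8 := (dx * dy * dz / 8)%:M.

(* local node index (a,b,c) |-> a + 2b + 4c (0-based version of (a+1)+2b+4c) *)
Definition node_a (p : 'I_8) : 'I_2 := inord (p %% 2).
Definition node_b (p : 'I_8) : 'I_2 := inord ((p %/ 2) %% 2).
Definition node_c (p : 'I_8) : 'I_2 := inord (p %/ 4).

Definition DU (U : 'I_2 -> 'I_2 -> 'I_2 -> R) : 'M[R]_8 :=
  \matrix_(p, q) (if p == q then U (node_a p) (node_b p) (node_c p) else 0).

Definition Hmat (hbar m dx dy dz : R) (U : 'I_2 -> 'I_2 -> 'I_2 -> R) : 'M[R]_8 :=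
  (hbar ^+ 2 / (2 * m)) *: (Dmat *m DS2 dx dy dz *m invmx (Dl1 dx dy dz) *m Dmat^T)
  + DV2 dx dy dz *m DU U.

Definition DV2_invsqrt (dx dy dz : R) : 'M[R]_8 :=
  ((Num.sqrt (dx * dy * dz / 8))^-1)%:M.

Definition dt_CFL_gen (hbar m dx dy dz : R) (U : 'I_2 -> 'I_2 -> 'I_2 -> R) : R :=
  2 / spectral_radius
        (hbar^-1 *: (DV2_invsqrt dx dy dz *m Hmat hbar m dx dy dz U *m DV2_invsqrt dx dy dz)).

Definition maxU (U : 'I_2 -> 'I_2 -> 'I_2 -> R) : R :=
  \big[Num.max/0]_(a < 2) \big[Num.max/0]_(b < 2) \big[Num.max/0]_(c < 2) `|U a b c|.

Definition dt_CFL (hbar m dx dy dz : R) (U : 'I_2 -> 'I_2 -> 'I_2 -> R) : R :=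
  2 / ((2 * hbar / m) * (dx ^- 2 + dy ^- 2 + dz ^- 2) + hbar^-1 * maxU U).

End SingleCell.

(* Main.v *)
Require Import Defs.
From HB Require Import structures.
From mathcomp Require Import all_boot all_order all_algebra.
From mathcomp Require Import classical_sets boolp reals.
From mathcomp Require Import complex mxtens.
From mathcomp Require Import ring lra.
Set Implicit Arguments. Unset Strict Implicit.
Import Order.TTheory GRing.Theory Num.Theory.
Local Open Scope ring_scope.

Definition B2 (R : realType) : 'M[R]_2 := (W1 R)^T *m W1 R.
Definition I2 (R : realType) : 'M[R]_2 := 1%:M.
Definition T1 (R : realType) : 'M[R]_8 := I2 R *t I2 R *t B2 R.
Definition T2 (R : realType) : 'M[R]_8 := I2 R *t B2 R *t I2 R.
Definition T3 (R : realType) : 'M[R]_8 := B2 R *t I2 R *t I2 R.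

Lemma invmx_eq (R : realType) n (A B : 'M[R]_n) : B *m A = 1%:M -> invmx A = B.
Proof.
move=> h; have h' := mulmx1C h.
have uA : A \in unitmx.
  by rewrite unitmxE; apply/unitrPr; exists (\det B); rewrite -det_mulmx h' det1.
by rewrite -[invmx A]mulmx1 -h' mulmxA mulVmx // mul1mx.
Qed.

Lemma diag3M (R : realType) (a b c a' b' c' : R) :
  diag3 a b c *m diag3 a' b' c' = diag3 (a * a') (b * b') (c * c').
Proof.
by rewrite /diag3 !mulmx_block !(mulmx0, mul0mx, addr0, add0r) -!scalar_mxM.
Qed.

Lemma diag3_1 (R : realType) : diag3 1 1 1 = 1%:M :> 'M[R]_(4+4+4).
Proof. by rewrite /diag3 -!scalar_mx_block. Qed.

Lemma inv_Dl1 (R : realType) (dx dy dz : R) : dx != 0 -> dy != 0 -> dz != 0 ->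
  invmx (Dl1 dx dy dz) = diag3 dx^-1 dy^-1 dz^-1.
Proof.
move=> hx hy hz; apply: invmx_eq; rewrite /Dl1 diag3M !mulVf //; exact: diag3_1.
Qed.

Lemma tens3T (R : realType) m1 n1 m2 n2 m3 n3 (A : 'M[R]_(m1,n1)) (B : 'M[R]_(m2,n2)) (C : 'M[R]_(m3,n3)) :
  (A *t B *t C) *m (A *t B *t C)^T = (A *m A^T) *t (B *m B^T) *t (C *m C^T).
Proof. by rewrite !trmx_tens !tensmx_mul. Qed.

Lemma D1T (R : realType) :
  ((1%:M : 'M[R]_2) *t (1%:M : 'M[R]_2) *t (W1 R)^T : 'M[R]_(8, 4)) *m
  ((1%:M : 'M[R]_2) *t (1%:M : 'M[R]_2) *t (W1 R)^T : 'M[R]_(8, 4))^T = T1 R.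
Proof. have := @tens3T R _ _ _ _ _ _ (1%:M : 'M[R]_2) (1%:M : 'M[R]_2) (W1 R)^T.
by rewrite !trmx1 !mulmx1 trmxK. Qed.
Lemma D2T (R : realType) :
  ((1%:M : 'M[R]_2) *t (W1 R)^T *t (1%:M : 'M[R]_2) : 'M[R]_(8, 4)) *m
  ((1%:M : 'M[R]_2) *t (W1 R)^T *t (1%:M : 'M[R]_2) : 'M[R]_(8, 4))^T = T2 R.
Proof. have := @tens3T R _ _ _ _ _ _ (1%:M : 'M[R]_2) (W1 R)^T (1%:M : 'M[R]_2).
by rewrite !trmx1 !mulmx1 trmxK. Qed.
Lemma D3T (R : realType) :
  ((W1 R)^T *t (1%:M : 'M[R]_2) *t (1%:M : 'M[R]_2) : 'M[R]_(8, 4)) *m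
  ((W1 R)^T *t (1%:M : 'M[R]_2) *t (1%:M : 'M[R]_2) : 'M[R]_(8, 4))^T = T3 R.
Proof. have := @tens3T R _ _ _ _ _ _ (W1 R)^T (1%:M : 'M[R]_2) (1%:M : 'M[R]_2).
by rewrite !trmx1 !mulmx1 trmxK. Qed.

Lemma DDT (R : realType) (a b c : R) :
  Dmat R *m diag3 a b c *m (Dmat R)^T = a *: T1 R + b *: T2 R + c *: T3 R.
Proof.
rewrite /Dmat /diag3 mulNmx raddfN /= mulmxN mulNmx opprK !mul_row_block !(mulmx0, mul0mx, addr0, add0r).
rewrite !tr_row_mx !mul_row_col !mul_mx_scalar -!scalemxAl.
by rewrite D1T D2T D3T.
Qed.

Definition Amat (R : realType) (hbar m dx dy dz : R) U : 'M[R]_8 :=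
  (hbar / m) *: (dx^-2 *: T1 R + dy^-2 *: T2 R + dz^-2 *: T3 R) + hbar^-1 *: DU U.

Lemma A_eq (R : realType) (hbar m dx dy dz : R) U :
  0 < hbar -> 0 < m -> 0 < dx -> 0 < dy -> 0 < dz ->
  hbar^-1 *: (DV2_invsqrt dx dy dz *m Hmat hbar m dx dy dz U *m DV2_invsqrt dx dy dz)
  = Amat hbar m dx dy dz U.
Proof.
move=> hh hm hx hy hz.
have hx0 : dx != 0 by rewrite gt_eqF.
have hy0 : dy != 0 by rewrite gt_eqF.
have hz0 : dz != 0 by rewrite gt_eqF.
have hh0 : hbar != 0 by rewrite gt_eqF.
have hm0 : m != 0 by rewrite gt_eqF.
have hv : 0 <= dx * dy * dz / 8 by apply: divr_ge0; [rewrite !mulr_ge0 // ltW|].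
rewrite /Hmat inv_Dl1 // /DS2 -(mulmxA (Dmat R)) diag3M DDT.
rewrite /DV2_invsqrt /DV2 !mul_scalar_mx mul_mx_scalar scalerA.
rewrite scalerA -mulrA -invfM -expr2 sqr_sqrtr //.
rewrite /Amat !scalerDr !scalerA.
congr (_ *: _ + _ *: _ + _ *: _ + _ *: _); field; by rewrite ?hx0 ?hy0 ?hz0 ?hh0 ?hm0.
Qed.

Lemma B2E (R : realType) : B2 R = \matrix_(i,j) (if i == j then 1 else -1).
Proof. apply/matrixP=> i j; rewrite !mxE big_ord1 !mxE.
by case: i => [[|[|]]] //= ?; case: j => [[|[|]]] //= ?; rewrite ?mulN1r ?mulr1 ?mul1r ?opprK. Qed.

Ltac cases8 i := case: i => [[|[|[|[|[|[|[|[|?]]]]]]]] ?] //.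
Ltac simpl_num := rewrite ?mul1r ?mulr1 ?mul0r ?mulr0 ?normrN ?normr1 ?normr0 ?addr0 ?add0r ?mulN1r ?mulrN1 ?opprK ?oppr0.

Lemma T1_sum (R : realType) (j : 'I_8) : \sum_i `|T1 R i j| = 2.
Proof. rewrite /T1 /I2 B2E !big_ord_recl big_ord0 !mxE /=.
cases8 j; simpl_num; lra. Qed.
Lemma T2_sum (R : realType) (j : 'I_8) : \sum_i `|T2 R i j| = 2.
Proof. rewrite /T2 /I2 B2E !big_ord_recl big_ord0 !mxE /=.
cases8 j; simpl_num; lra. Qed.
Lemma T3_sum (R : realType) (j : 'I_8) : \sum_i `|T3 R i j| = 2.
Proof. rewrite /T3 /I2 B2E !big_ord_recl big_ord0 !mxE /=.
cases8 j; simpl_num; lra. Qed.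

Lemma T1_sym (R : realType) : (T1 R)^T = T1 R.
Proof. apply/matrixP=> i j; rewrite /T1 /I2 B2E !mxE /=. by cases8 i; cases8 j. Qed.
Lemma T2_sym (R : realType) : (T2 R)^T = T2 R.
Proof. apply/matrixP=> i j; rewrite /T2 /I2 B2E !mxE /=. by cases8 i; cases8 j. Qed.
Lemma T3_sym (R : realType) : (T3 R)^T = T3 R.
Proof. apply/matrixP=> i j; rewrite /T3 /I2 B2E !mxE /=. by cases8 i; cases8 j. Qed.

Definition o0 : 'I_8 := @Ordinal 8 0 isT.
Definition o1 : 'I_8 := @Ordinal 8 1 isT.
Lemma T1_01 (R : realType) : T1 R o0 o1 = -1.
Proof. by rewrite /T1 /I2 B2E !mxE /=; simpl_num. Qed.
Lemma T2_01 (R : realType) : T2 R o0 o1 = 0.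
Proof. by rewrite /T2 /I2 B2E !mxE /=; simpl_num. Qed.
Lemma T3_01 (R : realType) : T3 R o0 o1 = 0.
Proof. by rewrite /T3 /I2 B2E !mxE /=; simpl_num. Qed.


Lemma DU_sym (R : realType) U : (DU (R:=R) U)^T = DU U.
Proof.
apply/matrixP=> i j; rewrite !mxE; by have [->|ne] := eqVneq i j.
Qed.

Lemma DU_col (R : realType) U (j : 'I_8) :
  \sum_i `|DU (R:=R) U i j| = `|U (node_a j) (node_b j) (node_c j)|.
Proof.
rewrite (bigD1 j) //= big1 ?addr0 => [|i ne]; first by rewrite !mxE eqxx.
by rewrite !mxE (negbTE ne) normr0.
Qed.

Lemma le_max2 (R : realType) (F : 'I_2 -> R) i x : x <= F i -> x <= \big[Num.max/0]_(k < 2) F k.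
Proof.
move=> h; rewrite !big_ord_recl big_ord0 /=.
case: i h => [[|[|]]] //= p h.
  by rewrite (_ : ord0 = Ordinal p) ?le_max ?h //; apply: val_inj.
by rewrite (_ : lift ord0 ord0 = Ordinal p) ?le_max ?h ?orbT //; apply: val_inj.
Qed.

Lemma maxU_ge (R : realType) U a b c : `|U a b c| <= maxU (R:=R) U.
Proof. by apply: (le_max2 (i:=a)); apply: (le_max2 (i:=b)); apply: (le_max2 (i:=c)). Qed.

Lemma normcC (R : realType) (w : R[i]) : `|w| = (ComplexField.Normc.normc w)%:C%C.
Proof. by case: w => a b; rewrite normc_def. Qed.
Lemma normC_real (R : realType) (x : R) : `|(x%:C)%C| = (`|x|%:C)%C.
Proof. by rewrite normc_def /= expr0n /= addr0 sqrtr_sqr. Qed.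

Lemma gersh (R : realType) (A : 'M[R]_8) (Mb : R) (z : R[i]) :
  (forall j, \sum_i `|A i j| <= Mb) ->
  eigenvalue (map_mx (fun x : R => (x%:C)%C) A) z -> ComplexField.Normc.normc z <= Mb.
Proof.
move=> hs /eigenvalueP [v hv nz].
pose f := fun j => ComplexField.Normc.normc (v 0 j).
have [j _ jmax] := @arg_maxP _ _ _ ord0 xpredT f isT.
have jm : forall i, `|v 0 i| <= `|v 0 j|.
  by move=> i; rewrite !normcC lecR; apply: jmax.
have vj : 0 < `|v 0 j|.
  rewrite normr_gt0; apply/negP => /eqP vj0; move/negP: nz; apply; apply/eqP.
  apply/matrixP => a i; rewrite [a]ord1 mxE; apply/eqP; rewrite -normr_eq0 eq_le normr_ge0 andbT.
  by rewrite (le_trans (jm i)) // vj0 normr0.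
have e : z * v 0 j = \sum_i v 0 i * ((A i j)%:C)%C.
  by have := congr1 (fun M : 'rV[R[i]]_8 => M 0 j) hv; rewrite !mxE => <-; apply: eq_bigr => i _; rewrite mxE.
have : `|z| * `|v 0 j| <= `|v 0 j| * (Mb%:C)%C.
  rewrite -normrM e; apply: (le_trans (ler_norm_sum _ _ _)).
  apply: (@le_trans _ _ (\sum_i `|v 0 j| * ((`|A i j|)%:C)%C)).
    by apply: ler_sum => i _; rewrite normrM normC_real ler_wpM2r // -normC_real normr_ge0.
  rewrite -mulr_sumr ler_wpM2l // -rmorph_sum lecR; exact: hs.
rewrite mulrC ler_pM2l // normcC lecR //.
Qed.

Definition toC (R : realType) := fun x : R => (x%:C)%C.

Lemma map_mxX_C (R : realType) (A : 'M[R]_8) k :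
  map_mx (@toC R) (A ^+ k) = (map_mx (@toC R) A) ^+ k.
Proof.
elim: k => [|k IH].
  by rewrite !expr0; apply/matrixP => i j; rewrite !mxE /toC; case: (i == j).
rewrite !exprS -IH -!mulmxE; apply/matrixP => i j; rewrite !mxE /toC rmorph_sum.
by apply: eq_bigr => l _; rewrite !mxE rmorphM.
Qed.

Lemma trmxX (R : realType) (A : 'M[R]_8) k : A^T = A -> (A ^+ k)^T = A ^+ k.
Proof.
move=> hA; elim: k => [|k IH]; first by rewrite expr0; apply/matrixP=> i j; rewrite !mxE eq_sym.
by rewrite exprS -mulmxE trmx_mul IH hA !mulmxE -exprSr exprS.
Qed.

Lemma sym0 (R : realType) (S : 'M[R]_8) : S^T = S -> S * S = 0 -> S = 0.
Proof.
move=> hS h; apply/matrixP => i j; rewrite mxE.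
have := congr1 (fun M : 'M[R]_8 => M i i) h; rewrite -mulmxE !mxE => e.
have : \sum_k S i k ^+ 2 = 0.
  by rewrite -[RHS]e; apply: eq_bigr => k _; rewrite expr2 -[in X in _ * X = _]hS mxE.
move/psumr_eq0P => h2; apply/eqP; rewrite -sqrf_eq0; apply/eqP; apply: h2 => // k _.
exact: sqr_ge0.
Qed.

Lemma prodX (F : fieldType) (r : seq F) : all (fun z => z == 0) r ->
  \prod_(z <- r) ('X - z%:P) = 'X^(size r).
Proof.
elim: r => [|a r IH] /=; first by rewrite big_nil expr0.
by move/andP=> [/eqP-> h]; rewrite big_cons IH // subr0 exprS.
Qed.

Lemma nonzero_eig (R : realType) (A : 'M[R]_8) : A^T = A -> A != 0 ->
  exists z, eigenvalue (map_mx (fun x : R => (x%:C)%C) A) z /\ z != 0.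
Proof.
move=> hA hnz; apply: contrapT => hno.
set Ac := map_mx (fun x : R => (x%:C)%C) A.
have all0 : forall z, root (char_poly Ac) z -> z == 0.
  move=> z hz; case: (eqVneq z 0) => // nz; exfalso; apply: hno; exists z.
  by rewrite eigenvalue_root_char.
have [r hr] := closed_field_poly_normal (char_poly Ac).
have hp : char_poly Ac = 'X^(size r).
  rewrite hr (monicP (char_poly_monic _)) scale1r prodX //.
  apply/allP => z zr; apply: all0; rewrite hr (monicP (char_poly_monic _)) scale1r.
  by rewrite root_prod_XsubC.
have hs : size r = 8%N.
  by have := size_char_poly Ac; rewrite hp size_polyXn => -[].
have h8 : Ac ^+ 8 = 0.
  by have := Cayley_Hamilton Ac; rewrite hp hs rmorphXn /= horner_mx_X.
have hA8 : A ^+ 8 = 0.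
  apply/matrixP => i j; have := congr1 (fun M : 'M[R[i]]_8 => M i j) h8.
  rewrite -[Ac]/(map_mx (@toC R) A) -map_mxX_C !mxE /toC => e.
  by apply: complexI; rewrite e.
have h4 : A ^+ 4 = 0 by apply: sym0; [exact: trmxX | rewrite -exprD].
have h2 : A ^+ 2 = 0 by apply: sym0; [exact: trmxX | rewrite -exprD].
by move/negP: hnz; apply; apply/eqP; apply: sym0; [ | rewrite -expr2].
Qed.


Lemma Amat_sum (R : realType) (hbar m dx dy dz : R) U (j : 'I_8) :
  0 < hbar -> 0 < m -> 0 < dx -> 0 < dy -> 0 < dz ->
  \sum_i `|Amat hbar m dx dy dz U i j| <=
  (2 * hbar / m) * (dx ^- 2 + dy ^- 2 + dz ^- 2) + hbar^-1 * maxU U.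
Proof.
move=> hh hm hx hy hz.
have c0 : 0 <= hbar / m by rewrite ltW // divr_gt0.
have e0 : 0 <= hbar^-1 by rewrite ltW // invr_gt0.
have a0 : 0 <= dx^-2 by rewrite ltW // invr_gt0 exprn_gt0.
have b0 : 0 <= dy^-2 by rewrite ltW // invr_gt0 exprn_gt0.
have d0 : 0 <= dz^-2 by rewrite ltW // invr_gt0 exprn_gt0.
have bound : forall i, `|Amat hbar m dx dy dz U i j| <=
   hbar / m * (dx^-2 * `|T1 R i j| + dy^-2 * `|T2 R i j| + dz^-2 * `|T3 R i j|)
   + hbar^-1 * `|DU U i j|.
  move=> i; rewrite /Amat; set t1 := T1 R; set t2 := T2 R; set t3 := T3 R; set du := DU U.
  rewrite !mxE; apply: (le_trans (ler_normD _ _)).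
  rewrite normrM (ger0_norm c0) [`|hbar^-1 * _|]normrM (ger0_norm e0) lerD2r ler_wpM2l //.
  apply: (le_trans (ler_normD _ _)); rewrite [`|dz^-2 * _|]normrM (ger0_norm d0) lerD2r.
  apply: (le_trans (ler_normD _ _)).
  by rewrite [`|dx^-2 * _|]normrM [`|dy^-2 * _|]normrM (ger0_norm a0) (ger0_norm b0).
apply: (le_trans (ler_sum _ (fun i _ => bound i))).
rewrite big_split /= -!mulr_sumr !big_split /= -!mulr_sumr T1_sum T2_sum T3_sum DU_col.
rewrite (_ : hbar / m * (dx^-2 * 2 + dy^-2 * 2 + dz^-2 * 2) =
   2 * hbar / m * (dx^-2 + dy^-2 + dz^-2)); last by ring.
by rewrite lerD2l ler_wpM2l //; apply: maxU_ge.
Qed.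

Lemma Amat_sym (R : realType) (hbar m dx dy dz : R) U :
  (Amat hbar m dx dy dz U)^T = Amat hbar m dx dy dz U.
Proof.
rewrite /Amat !linearD /= !linearZ /= T1_sym T2_sym T3_sym DU_sym !scalerA.
by rewrite [dx^-2 * _]mulrC [dy^-2 * _]mulrC [dz^-2 * _]mulrC.
Qed.

Lemma Amat_entry (R : realType) (hbar m dx dy dz : R) U i j :
  Amat hbar m dx dy dz U i j =
  hbar / m * (dx^-2 * T1 R i j + dy^-2 * T2 R i j + dz^-2 * T3 R i j) + hbar^-1 * DU U i j.
Proof. by rewrite /Amat !mxE. Qed.

Lemma Amat_neq0 (R : realType) (hbar m dx dy dz : R) U :
  0 < hbar -> 0 < m -> 0 < dx -> Amat hbar m dx dy dz U != 0.
Proof.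
move=> hh hm hx; apply/negP => /eqP h.
have := congr1 (fun M : 'M[R]_8 => M o0 o1) h; have du : DU U o0 o1 = 0 by rewrite mxE.
rewrite /= Amat_entry T1_01 T2_01 T3_01 du mxE !mulr0 !addr0 mulrN1 => /eqP.
apply/negP; rewrite mulf_eq0 oppr_eq0 negb_or; apply/andP; split.
  by rewrite gt_eqF // divr_gt0.
by rewrite gt_eqF // invr_gt0 exprn_gt0.
Qed.

Theorem lemma6 (R : realType) (hbar m dx dy dz : R)
  (hhbar : 0 < hbar) (hm : 0 < m) (hdx : 0 < dx) (hdy : 0 < dy) (hdz : 0 < dz)
  (U : 'I_2 -> 'I_2 -> 'I_2 -> R) :
  dt_CFL hbar m dx dy dz U <= dt_CFL_gen hbar m dx dy dz U.
Proof.
rewrite /dt_CFL /dt_CFL_gen A_eq //.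
set Mb := (2 * hbar / m * (dx ^- 2 + dy ^- 2 + dz ^- 2) + hbar^-1 * maxU U).
set A := Amat hbar m dx dy dz U.
rewrite /spectral_radius.
set S := (X in sup X).
have [z0 [hz0 nz0]] := nonzero_eig (@Amat_sym R hbar m dx dy dz U) (@Amat_neq0 R hbar m dx dy dz U hhbar hm hdx).
have ne : (S !=set0)%classic by exists (ComplexField.Normc.normc z0); exists z0.
have ub : ubound S Mb.
  by move=> r [z [hz <-]]; apply: (gersh _ hz) => j; apply: Amat_sum.
have supub : sup S <= Mb by apply: ge_sup.
have lb : 0 < sup S.
  apply: (@lt_le_trans _ _ (ComplexField.Normc.normc z0)).
    rewrite lt_neqAle eq_sym; apply/andP; split.
      by apply/eqP => /(@ComplexField.Normc.eq0_normc R) /eqP; apply/negP.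
    by rewrite -lecR -normcC normr_ge0.
  apply: sup_upper_bound; last by exists z0.
  by split => //; exists Mb.
apply: ler_wpM2l => //.
by rewrite lef_pV2 ?posrE // (lt_le_trans lb).
Qed.
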